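(* Let $A_o,A_i\in\mathbb R^{n_y\times n_x}$, let $B_o,B_i\in\mathbb R^{n_y\times n_y}$ and $C_o,C_i\in\mathbb R^{n_x\times n_x}$ be invertible, and suppose the inclusion $y\in\{(A_o+B_o\Delta C_o)x:\|\Delta\|\le1\}$ contains the inclusion $y\in\{(A_i+B_i\Delta C_i)x:\|\Delta\|\le1\}$. Let $W_o=(\det(B_oB_o^T))^{1/(2n_y)}\|C_o\|_{\mathrm F}$ and $W_i=(\det(B_iB_i^T))^{1/(2n_y)}\|C_i\|_{\mathrm F}$. If $W_o=W_i$, then $A_o=A_i$ and there exists $\lambda>0$ such that $\lambda B_oB_o^T=B_iB_i^T$ and $C_o^TC_o=\lambda C_i^TC_i$.
   Context: $\|\cdot\|$ is the spectral norm, $\|\cdot\|_{\mathrm F}$ the Frobenius norm. An inclusion contains another if every pair $(x,y)\in\mathbb C^{n_x}\times\mathbb C^{n_y}$ satisfying the second also satisfies the first. *)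

(* Defs.v *)
From HB Require Import structures.
From mathcomp Require Import all_boot all_order all_algebra.
From mathcomp Require Import classical_sets reals exp.
From mathcomp Require Import complex.
Set Implicit Arguments. Unset Strict Implicit. Unset Printing Implicit Defensive.
Import Order.TTheory GRing.Theory Num.Theory.
Local Open Scope ring_scope.
Local Open Scope classical_set_scope.

Section Defs.
Variable R : realType.

Definition cvnorm (n : nat) (v : 'cV[R[i]]_n) : R :=
  Num.sqrt (\sum_k ((complex.Re (v k 0)) ^+ 2 + (complex.Im (v k 0)) ^+ 2)).

Definition specnorm (m n : nat) (D : 'M[R[i]]_(m, n)) : R :=
  sup [set cvnorm (D *m v) | v in [set v : 'cV[R[i]]_n | cvnorm v <= 1]].

Definition frobnorm (m n : nat) (M : 'M[R]_(m, n)) : R :=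
  Num.sqrt (\sum_i \sum_j (M i j) ^+ 2).

Definition cmx (m n : nat) (M : 'M[R]_(m, n)) : 'M[R[i]]_(m, n) :=
  map_mx (fun r : R => (r%:C)%C) M.

Definition in_inclusion (nx ny : nat) (A : 'M[R]_(ny, nx)) (B : 'M[R]_ny)
  (C : 'M[R]_nx) (x : 'cV[R[i]]_nx) (y : 'cV[R[i]]_ny) : Prop :=
  exists D : 'M[R[i]]_(ny, nx),
    specnorm D <= 1 /\ y = (cmx A + cmx B *m D *m cmx C) *m x.

Definition incl_contains (nx ny : nat)
  (Ao : 'M[R]_(ny, nx)) (Bo : 'M[R]_ny) (Co : 'M[R]_nx)
  (Ai : 'M[R]_(ny, nx)) (Bi : 'M[R]_ny) (Ci : 'M[R]_nx) : Prop :=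
  forall x y, in_inclusion Ai Bi Ci x y -> in_inclusion Ao Bo Co x y.

Definition incl_size (nx ny : nat) (B : 'M[R]_ny) (C : 'M[R]_nx) : R :=
  powR (\det (B *m B^T)) ((2 * ny)%:R^-1) * frobnorm C.

End Defs.

(* Main.v *)
Require Import Defs.
From HB Require Import structures.
From mathcomp Require Import all_boot all_order all_algebra.
From mathcomp Require Import classical_sets reals exp.
From mathcomp Require Import complex.
From mathcomp Require Import ring lra.
Set Implicit Arguments. Unset Strict Implicit. Unset Printing Implicit Defensive.
Import Order.TTheory GRing.Theory Num.Theory.
Local Open Scope ring_scope.

Section Aux.
Variable R : realType.

Definition nrm2 n (v : 'cV[R]_n) := \sum_k (v k 0)^+2.
Definition bf n (S : 'M[R]_n) (u v : 'cV[R]_n) := (u^T *m S *m v) 0 0.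
Definition qf n (S : 'M[R]_n) v := bf S v v.

Lemma nrm2E n (v : 'cV[R]_n) : nrm2 v = (v^T *m v) 0 0.
Proof. by rewrite /nrm2 mxE; apply: eq_bigr => k _; rewrite mxE expr2. Qed.

Lemma nrm2_ge0 n (v : 'cV[R]_n) : 0 <= nrm2 v.
Proof. by apply: sumr_ge0 => k _; rewrite sqr_ge0. Qed.

Lemma nrm2_eq0 n (v : 'cV[R]_n) : nrm2 v = 0 -> v = 0.
Proof.
move=> /eqP; rewrite psumr_eq0 => [/allP H|k _]; last by rewrite sqr_ge0.
apply/matrixP => i j; rewrite (ord1 j) mxE.
by have /implyP := H i (mem_index_enum _); rewrite sqrf_eq0 => /(_ isT) /eqP.
Qed.

Lemma nrm2Z n a (v : 'cV[R]_n) : nrm2 (a *: v) = a ^+ 2 * nrm2 v.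
Proof. by rewrite /nrm2 mulr_sumr; apply: eq_bigr => k _; rewrite mxE exprMn. Qed.

Lemma nrm2N n (v : 'cV[R]_n) : nrm2 (- v) = nrm2 v.
Proof. by apply: eq_bigr => k _; rewrite mxE sqrrN. Qed.

Lemma nrm2_parallel n (c x : 'cV[R]_n) :
  nrm2 (c + x) + nrm2 (c - x) = 2 * (nrm2 c + nrm2 x).
Proof.
rewrite /nrm2 -!big_split mulr_sumr; apply: eq_bigr => k _.
by rewrite !mxE /=; ring.
Qed.

Lemma qf_mul n (M : 'M[R]_n) v : qf (M^T *m M) v = nrm2 (M *m v).
Proof. by rewrite /qf /bf nrm2E trmx_mul !mulmxA. Qed.

Lemma bf_delta n (S : 'M[R]_n) i j : bf S (delta_mx i 0) (delta_mx j 0) = S i j.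
Proof. by rewrite /bf trmx_delta -rowE -colE !mxE. Qed.

Lemma qf_delta n (S : 'M[R]_n) i : qf S (delta_mx i 0) = S i i.
Proof. exact: bf_delta. Qed.

Lemma bfDl n (S : 'M[R]_n) u v w : bf S (u + v) w = bf S u w + bf S v w.
Proof. by rewrite /bf linearD /= !mulmxDl mxE. Qed.
Lemma bfDr n (S : 'M[R]_n) u v w : bf S w (u + v) = bf S w u + bf S w v.
Proof. by rewrite /bf mulmxDr mxE. Qed.
Lemma bfZl n (S : 'M[R]_n) a u w : bf S (a *: u) w = a * bf S u w.
Proof. by rewrite /bf linearZ /= -!scalemxAl mxE. Qed.
Lemma bfZr n (S : 'M[R]_n) a u w : bf S w (a *: u) = a * bf S w u.
Proof. by rewrite /bf -scalemxAr mxE. Qed.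
Lemma bf_sym n (S : 'M[R]_n) u v : S^T = S -> bf S u v = bf S v u.
Proof.
move=> sS; rewrite /bf.
have -> : u^T *m S *m v = (v^T *m S *m u)^T by rewrite !trmx_mul trmxK sS mulmxA.
by rewrite [LHS]mxE.
Qed.
Lemma bf_sub n (S T : 'M[R]_n) u v : bf (S - T) u v = bf S u v - bf T u v.
Proof. rewrite /bf mulmxBr mulmxBl. by rewrite !mxE. Qed.
Lemma bf1 n (u v : 'cV[R]_n) : bf 1%:M u v = (u^T *m v) 0 0.
Proof. by rewrite /bf mulmx1. Qed.

Lemma psd_diag0 n (S : 'M[R]_n) : S^T = S -> (forall v, 0 <= qf S v) ->
  (forall i, S i i = 0) -> S = 0.
Proof.
move=> sS psd d0; apply/matrixP => i j; rewrite mxE.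
have key t : 0 <= 2 * t * S i j.
  have := psd (delta_mx i 0 + t *: delta_mx j 0).
  rewrite /qf bfDl !bfDr !bfZl !bfZr !bf_delta !d0.
  have -> : S j i = S i j by rewrite -[in LHS]sS mxE.
  by move=> h; rewrite (le_trans h) // le_eqVlt; apply/orP; left; apply/eqP; ring.
have := key 1; have := key (-1).
by move=> h1 h2; apply/eqP; rewrite eq_le; apply/andP; split; nra.
Qed.


Lemma delta_neq0 n (i : 'I_n) : delta_mx i 0 != 0 :> 'cV[R]_n.
Proof.
apply/eqP => /matrixP /(_ i 0); rewrite !mxE !eqxx /= => /eqP.
by rewrite oner_eq0.
Qed.

Lemma qf_congr n (L S : 'M[R]_n) w : qf (L *m S *m L^T) w = qf S (L^T *m w).
Proof. by rewrite /qf /bf trmx_mul trmxK !mulmxA. Qed.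

Lemma hadamard n (S : 'M[R]_n) : S^T = S ->
  (forall v, v != 0 -> 0 < qf S v) -> \det S <= \prod_i S i i.
Proof.
elim: n S => [|n IH] S sS pd; first by rewrite det_mx00 big_ord0.
set a := S 0 0.
have a_gt0 : 0 < a by rewrite /a -qf_delta pd // delta_neq0.
pose S0 : 'M[R]_(1 + n) := S.
pose b := dlsubmx S0. pose S1 := drsubmx S0.
have sS0 : S0^T = S0 by [].
have hul : ulsubmx S0 = a%:M.
  apply/matrixP => i j; rewrite !ord1 !mxE eqxx mulr1n /a.
  by have -> : lshift n (0 : 'I_1) = 0 :> 'I_(1+n) by apply: val_inj.
have hur : ursubmx S0 = b^T by rewrite /b trmx_dlsub sS0.
have hS : S0 = block_mx a%:M b^T b S1 by rewrite -hul -hur submxK.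
have sS1 : S1^T = S1 by rewrite /S1 trmx_drsub sS0.
pose k := a^-1.
have ka : k * a = 1 by rewrite mulVf // gt_eqF.
pose L : 'M[R]_(1+n) := block_mx 1%:M 0 (- k *: b) 1%:M.
pose S2 := S1 - k *: (b *m b^T).
have hLS : L *m S0 *m L^T = block_mx a%:M 0 0 S2.
  rewrite hS /L tr_block_mx !mulmx_block.
  rewrite !(mul1mx, mulmx1, mul0mx, mulmx0, add0r, addr0, trmx0, trmx1).
  rewrite mul_mx_scalar mul_scalar_mx.
  have hb : forall m p (X : 'M[R]_(m,p)), a *: (- k *: X) + X = 0.
    by move=> m p X; rewrite scalerA mulrN mulrC ka scaleN1r addNr.
  rewrite hb mul0mx add0r linearZ /= hb -scalemxAl scaleNr.
  by rewrite /S2 addrC.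
have detL : \det L = 1 by rewrite det_lblock !det1 mulr1.
have detS : \det S = a * \det S2.
  have := congr1 determinant hLS.
  rewrite !det_mulmx det_tr detL mul1r mulr1 det_lblock det_scalar expr1.
  by move=> <-.
have sS2 : S2^T = S2.
  by rewrite /S2 linearB /= linearZ /= trmx_mul trmxK sS1.
have pd2 : forall v, v != 0 -> 0 < qf S2 v.
  move=> v vn0.
  have -> : qf S2 v = qf (L *m S0 *m L^T) (col_mx 0 v).
    rewrite hLS /qf /bf tr_col_mx mul_row_block mul_row_col.
    by rewrite !(mul0mx, mulmx0, add0r, addr0, trmx0).
  rewrite qf_congr pd //; apply/eqP => h.
  have uL : L^T \in unitmx by rewrite unitmxE det_tr detL unitr1.
  have : invmx L^T *m (L^T *m col_mx 0 v) = col_mx 0 0.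
    by rewrite h mulmx0 col_mx0.
  rewrite mulmxA mulVmx // mul1mx => /eq_col_mx [_ v0].
  by move: vn0; rewrite v0 eqxx.
have le2 : forall i, 0 <= S2 i i <= S1 i i.
  move=> i; apply/andP; split.
    by rewrite -qf_delta ltW ?pd2 ?delta_neq0.
  rewrite /S2 !mxE gerBl // mulr_ge0 ?invr_ge0 ?(ltW a_gt0) //.
  by apply: sumr_ge0 => j _; rewrite !mxE -expr2 sqr_ge0.
rewrite detS big_ord_recl.
have -> : \prod_(i < n) S (lift ord0 i) (lift ord0 i) = \prod_i S1 i i.
  apply: eq_bigr => i _; rewrite /S1 !mxE /S0.
  by have -> : rshift 1 i = lift ord0 i by apply: val_inj.
rewrite ler_pM2l //; apply: le_trans (IH _ sS2 pd2) _.
exact: ler_prod.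
Qed.


Lemma nrm2_qf1 n (v : 'cV[R]_n) : nrm2 v = qf 1%:M v.
Proof. by rewrite /qf /bf mulmx1 nrm2E. Qed.

Lemma nrm2_delta n (i : 'I_n) : nrm2 (delta_mx i 0) = 1.
Proof. by rewrite nrm2_qf1 qf_delta mxE eqxx. Qed.

Lemma nrm2_gt0 n (v : 'cV[R]_n) : v != 0 -> 0 < nrm2 v.
Proof.
move=> vn0; rewrite lt_def nrm2_ge0 andbT; apply/eqP => /nrm2_eq0 v0.
by move: vn0; rewrite v0 eqxx.
Qed.

Lemma key_real n (M : 'M[R]_n.+1) (c : 'cV[R]_n.+1) : M \in unitmx ->
  (forall w, nrm2 w <= 1 -> nrm2 (c + M *m w) <= 1) ->
  (\det M)^+2 <= 1 /\ ((\det M)^+2 = 1 -> c = 0 /\ M *m M^T = 1%:M).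
Proof.
move=> uM H.
have P1 : forall w, nrm2 w <= 1 -> nrm2 c + nrm2 (M *m w) <= 1.
  move=> w hw; have h1 := H w hw.
  have h2 := H (- w); rewrite nrm2N mulmxN in h2; have {}h2 := h2 hw.
  have := nrm2_parallel c (M *m w); lra.
have P2 : forall w, nrm2 (M *m w) <= nrm2 w.
  move=> w; case: (eqVneq w 0) => [->|wn0]; first by rewrite mulmx0.
  have s_gt0 := nrm2_gt0 wn0.
  set s := nrm2 w in s_gt0 *.
  pose t := (Num.sqrt s)^-1.
  have t2 : t ^+ 2 = s^-1 by rewrite /t exprVn sqr_sqrtr // ltW.
  have := P1 (t *: w); rewrite nrm2Z t2 mulVf ?gt_eqF // lexx => /(_ isT).
  rewrite -scalemxAr nrm2Z t2 => h.
  have h' : s^-1 * nrm2 (M *m w) <= 1.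
    by have := nrm2_ge0 c; lra.
  rewrite -[nrm2 (M *m w)]mul1r -(mulfV (lt0r_neq0 s_gt0)) -mulrA.
  by apply: ler_piMr => //; apply: ltW.
pose S := M^T *m M.
have sS : S^T = S by rewrite /S trmx_mul trmxK.
have pd : forall v, v != 0 -> 0 < qf S v.
  move=> v vn0; rewrite qf_mul nrm2_gt0 //; apply/eqP => h.
  have : invmx M *m (M *m v) = 0 by rewrite h mulmx0.
  by rewrite mulmxA mulVmx // mul1mx => v0; move: vn0; rewrite v0 eqxx.
have Sii : forall i, S i i = nrm2 (M *m delta_mx i 0) by move=> i; rewrite -qf_delta qf_mul.
have Sle : forall i, 0 <= S i i <= 1.
  by move=> i; rewrite Sii nrm2_ge0 /= -(nrm2_delta i) P2.
have dS : \det S = (\det M)^+2 by rewrite /S det_mulmx det_tr expr2.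
have had := hadamard sS pd.
have prod1 : \prod_i S i i <= 1 by apply: prodr_ile1 => i _; apply: Sle.
split; first by rewrite -dS (le_trans had prod1).
move=> dM1.
have Sj1 : forall j, S j j = 1.
  move=> j; apply/eqP; rewrite eq_le; case/andP: (Sle j) => S0 -> /=.
  have h1 : 1 <= \prod_i S i i by apply: le_trans had; rewrite dS dM1.
  apply: (le_trans h1); rewrite (bigD1 j) //=.
  apply: ler_piMr => //; apply: prodr_ile1 => i _; exact: Sle.
split.
  have := P1 (delta_mx 0 0); rewrite nrm2_delta lexx -Sii Sj1 => /(_ isT) h.
  apply: nrm2_eq0; apply/eqP; rewrite eq_le nrm2_ge0 andbT; lra.
have Q0 : 1%:M - S = 0.
  apply: psd_diag0.
  - by rewrite linearB /= trmx1 sS.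
  - by move=> v; rewrite /qf bf_sub -/(qf _ _) -/(qf _ _) -nrm2_qf1 qf_mul subr_ge0 P2.
  - by move=> i; have := Sj1 i; rewrite !mxE eqxx => ->; rewrite subrr.
have : S = 1%:M by apply/eqP; rewrite eq_sym -subr_eq0 Q0.
exact: mulmx1C.
Qed.



Definition n2c (z : R[i]) := complex.Re z ^+ 2 + complex.Im z ^+ 2.
Definition nc (z : R[i]) := Num.sqrt (n2c z).

Lemma n2c_ge0 z : 0 <= n2c z.
Proof. by rewrite addr_ge0 ?sqr_ge0. Qed.

Lemma nc_ge0 z : 0 <= nc z. Proof. exact: sqrtr_ge0. Qed.

Lemma n2c_nc z : n2c z = nc z ^+ 2.
Proof. by rewrite sqr_sqrtr ?n2c_ge0. Qed.

Lemma normc_nc z : `|z| = (nc z)%:C%C.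
Proof. by rewrite normc_def. Qed.

Lemma nc_mul x y : nc (x * y) = nc x * nc y.
Proof. by have := normrM x y; rewrite !normc_nc -rmorphM => /complexI. Qed.

Lemma nc_add x y : nc (x + y) <= nc x + nc y.
Proof. by have := ler_normD x y; rewrite !normc_nc -rmorphD lecR. Qed.

Lemma nc_sum I (r : seq I) (F : I -> R[i]) :
  nc (\sum_(i <- r) F i) <= \sum_(i <- r) nc (F i).
Proof.
elim: r => [|a r IH]; first by rewrite !big_nil /nc /n2c /= expr0n addr0 sqrtr0.
rewrite !big_cons; apply: le_trans (nc_add _ _) _; exact: lerD.
Qed.

Lemma n2cR (r : R) : n2c (r%:C)%C = r ^+ 2.
Proof. by rewrite /n2c /= expr0n addr0. Qed.

Lemma ncR (r : R) : nc (r%:C)%C = `|r|.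
Proof. by rewrite /nc n2cR sqrtr_sqr. Qed.

Lemma n2cRM (r : R) z : n2c ((r%:C)%C * z) = r ^+ 2 * n2c z.
Proof. by case: z => a b; rewrite /n2c /=; ring. Qed.

Lemma cvnormE n (v : 'cV[R[i]]_n) : cvnorm v = Num.sqrt (\sum_k n2c (v k 0)).
Proof. by []. Qed.

Lemma cvnorm_le1 n (v : 'cV[R[i]]_n) : (cvnorm v <= 1) = (\sum_k n2c (v k 0) <= 1).
Proof. by rewrite cvnormE -{1}sqrtr1 ler_sqrt. Qed.

Lemma cmxM m n p (A : 'M[R]_(m, n)) (B : 'M[R]_(n, p)) : cmx (A *m B) = cmx A *m cmx B.
Proof. exact: (map_mxM (real_complex R)). Qed.
Lemma cmxD m n (A B : 'M[R]_(m, n)) : cmx (A + B) = cmx A + cmx B.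
Proof. exact: (map_mxD (real_complex R)). Qed.
Lemma cmxN m n (A : 'M[R]_(m, n)) : cmx (- A) = - cmx A.
Proof. exact: (map_mxN (real_complex R)). Qed.
Lemma cmxE m n (A : 'M[R]_(m, n)) i j : cmx A i j = ((A i j)%:C)%C.
Proof. by rewrite mxE. Qed.
Lemma cmx_inj m n (A B : 'M[R]_(m, n)) : cmx A = cmx B -> A = B.
Proof.
move=> /matrixP h; apply/matrixP => i j; have := h i j; rewrite !cmxE.
exact: complexI.
Qed.

Lemma cvnorm_cmx n (v : 'cV[R]_n) : cvnorm (cmx v) = Num.sqrt (nrm2 v).
Proof. by rewrite cvnormE; congr Num.sqrt; apply: eq_bigr => k _; rewrite cmxE n2cR. Qed.


Lemma le_sqr (x y : R) : 0 <= x -> x <= y -> x ^+ 2 <= y ^+ 2.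
Proof. by move=> x0 xy; rewrite !expr2 ler_pM. Qed.

Lemma le_sum1 n (F : 'I_n -> R) k : (forall i, 0 <= F i) -> F k <= \sum_i F i.
Proof. by move=> h; rewrite (bigD1 k) //= lerDl sumr_ge0. Qed.

Lemma cauchy_schwarz n (a b : 'I_n -> R) :
  (\sum_k a k * b k) ^+ 2 <= (\sum_k a k ^+ 2) * (\sum_k b k ^+ 2).
Proof.
have E : forall A P, \sum_k (A * b k - P * a k) ^+ 2 = A ^+ 2 * (\sum_k b k ^+ 2)
     + (- (2 * A * P)) * (\sum_k a k * b k) + P ^+ 2 * (\sum_k a k ^+ 2).
  move=> A P; rewrite !mulr_sumr -!big_split /=.
  by apply: eq_bigr => k _ /=; ring.
set A := \sum_k a k ^+ 2; set B := \sum_k b k ^+ 2; set P := \sum_k a k * b k.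
have A0 : 0 <= A by apply: sumr_ge0 => k _; rewrite sqr_ge0.
have [A0'|Apos] := eqVneq A 0.
  have ak : forall k, a k = 0.
    move=> k; move/eqP: A0'; rewrite psumr_eq0 => [/allP H|i _]; last by rewrite sqr_ge0.
    by have /implyP := H k (mem_index_enum _); rewrite sqrf_eq0 => /(_ isT) /eqP.
  have -> : P = 0 by rewrite /P big1 // => k _; rewrite ak mul0r.
  by rewrite expr0n /= A0' mul0r.
have Agt0 : 0 < A by rewrite lt_def Apos A0.
have H0 : 0 <= \sum_k (A * b k - P * a k) ^+ 2 by apply: sumr_ge0 => k _; rewrite sqr_ge0.
rewrite E -/A -/B -/P in H0.
have : 0 <= A * (A * B - P ^+ 2).
  have -> : A * (A * B - P ^+ 2) = A ^+ 2 * B + (- (2 * A * P)) * P + P ^+ 2 * A by ring.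
  exact: H0.
by rewrite pmulr_rge0 // subr_ge0.
Qed.

Lemma specnorm_le1 m n (D : 'M[R[i]]_(m,n)) :
  (forall v, cvnorm v <= 1 -> cvnorm (D *m v) <= 1) -> specnorm D <= 1.
Proof.
move=> H; apply: ge_sup.
  exists (cvnorm (D *m 0)); exists 0 => //.
  by rewrite /= cvnorm_le1 big1 // => k _; rewrite mxE /n2c /= expr0n addr0.
move=> y [v hv <-]; exact: H.
Qed.

Lemma nc_le1 n (v : 'cV[R[i]]_n) k : cvnorm v <= 1 -> nc (v k 0) <= 1.
Proof.
rewrite cvnorm_le1 => h; rewrite /nc -sqrtr1 ler_wsqrtr //.
apply: (le_trans _ h); rewrite (bigD1 k) //= lerDl sumr_ge0 // => i _; exact: n2c_ge0.
Qed.

Lemma specnorm_ub m n (D : 'M[R[i]]_(m,n)) v :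
  specnorm D <= 1 -> cvnorm v <= 1 -> cvnorm (D *m v) <= 1.
Proof.
move=> hD hv; apply: le_trans hD; apply: ub_le_sup; last by exists v.
pose K i := \sum_j nc (D i j).
exists (Num.sqrt (\sum_i K i ^+ 2)) => y [u hu <-].
rewrite cvnormE ler_wsqrtr // ler_sum // => i _.
rewrite n2c_nc le_sqr ?nc_ge0 // mxE.
apply: le_trans (nc_sum _ _) _; rewrite /K ler_sum // => j _.
by rewrite nc_mul ler_piMr ?nc_ge0 ?nc_le1.
Qed.

Lemma rank1_spec m n (z : 'cV[R]_n) (w : 'cV[R]_m) : 0 < nrm2 z -> nrm2 w <= nrm2 z ->
  specnorm (cmx ((nrm2 z)^-1 *: (w *m z^T))) <= 1 /\
  cmx ((nrm2 z)^-1 *: (w *m z^T)) *m cmx z = cmx w.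
Proof.
move=> zpos wz; set nz := nrm2 z in zpos wz *.
have ztz : z^T *m z = nz%:M.
  by rewrite [LHS]mx11_scalar /nz /nrm2 mxE; congr (_%:M); apply: eq_bigr => k _; rewrite mxE expr2.
split; last first.
  by rewrite -cmxM -scalemxAl -mulmxA ztz mul_mx_scalar scalerA mulVf ?lt0r_neq0 // scale1r.
apply: specnorm_le1 => v hv.
set s := (cmx z^T *m v) 0 0.
have entry : forall i, (cmx (nz^-1 *: (w *m z^T)) *m v) i 0 = ((nz^-1 * w i 0)%:C)%C * s.
  move=> i; rewrite scalemxAl cmxM -mulmxA mxE big_ord1 /s.
  by rewrite cmxE mxE.
rewrite cvnorm_le1.
under eq_bigr => i _ do rewrite entry n2cRM exprMn.
rewrite -mulr_suml -mulr_sumr.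
have hs : n2c s <= nz.
  have h1 : nc s <= \sum_k `|z k 0| * nc (v k 0).
    rewrite /s mxE; apply: le_trans (nc_sum _ _) _.
    by apply: ler_sum => k _; rewrite nc_mul cmxE mxE ncR.
  rewrite n2c_nc; apply: le_trans (le_sqr (nc_ge0 _) h1) _.
  apply: le_trans (cauchy_schwarz _ _) _.
  rewrite cvnorm_le1 in hv.
  have -> : \sum_k `|z k 0| ^+ 2 = nz by apply: eq_bigr => k _; rewrite real_normK ?num_real.
  rewrite -[X in _ <= X]mulr1 ler_pM2l //.
  by apply: le_trans hv; apply: ler_sum => k _; rewrite n2c_nc.
have hw : \sum_i w i 0 ^+ 2 <= nz by [].
have q0 : 0 < nz^-1 by rewrite invr_gt0.
have -> : 1 = nz^-1 ^+ 2 * nz * nz.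
  by field; rewrite lt0r_neq0.
apply: ler_pM => //.
- rewrite mulr_ge0 ?sqr_ge0 //; apply: sumr_ge0 => i _; exact: sqr_ge0.
- exact: n2c_ge0.
- by rewrite ler_pM2l // exprn_gt0.
Qed.



Lemma cmxZ m n (a : R) (A : 'M[R]_(m, n)) : cmx (a *: A) = (a%:C)%C *: cmx A.
Proof. exact: (map_mxZ (real_complex R)). Qed.
Lemma cmx1 n : cmx (1%:M : 'M[R]_n) = 1%:M.
Proof. exact: (map_mx1 (real_complex R)). Qed.
Lemma cmx0 m n : cmx (0 : 'M[R]_(m, n)) = 0.
Proof. exact: (map_mx0 (real_complex R)). Qed.

Lemma spec_real m n (D : 'M[R[i]]_(m, n)) (z : 'cV[R]_n) (u : 'cV[R]_m) :
  specnorm D <= 1 -> D *m cmx z = cmx u -> nrm2 u <= nrm2 z.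
Proof.
move=> hD hu; case: (eqVneq z 0) => [z0|zn0].
  move: hu; rewrite z0 cmx0 mulmx0 -(cmx0 m 1) => /esym /cmx_inj ->.
  by rewrite /nrm2 !big1 // => k _; rewrite mxE expr0n.

have zpos := nrm2_gt0 zn0; set nz := nrm2 z in zpos *.
pose t := (Num.sqrt nz)^-1.
have t2 : t ^+ 2 = nz^-1 by rewrite /t exprVn sqr_sqrtr // ltW.
have hv : cvnorm (cmx (t *: z)) <= 1.
  by rewrite cvnorm_cmx nrm2Z t2 mulVf ?lt0r_neq0 // sqrtr1.
have e : D *m cmx (t *: z) = cmx (t *: u) by rewrite !cmxZ -scalemxAr hu.
have := specnorm_ub hD hv; rewrite e cvnorm_cmx nrm2Z t2 -sqrtr1 ler_sqrt // => h.
rewrite -[nrm2 u]mul1r -(mulfV (lt0r_neq0 zpos)) -mulrA.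
apply: ler_piMr => //; exact: ltW.
Qed.

Lemma geom nx ny (Ao Ai : 'M[R]_(ny.+1, nx)) (Bo Bi : 'M[R]_ny.+1)
  (Co Ci : 'M[R]_nx) (x : 'cV[R]_nx) :
  Bo \in unitmx -> Bi \in unitmx ->
  0 < nrm2 (Ci *m x) -> 0 < nrm2 (Co *m x) ->
  incl_contains Ao Bo Co Ai Bi Ci ->
  nrm2 (Ci *m x) ^+ ny.+1 * \det (Bi *m Bi^T) <= nrm2 (Co *m x) ^+ ny.+1 * \det (Bo *m Bo^T) /\
  (nrm2 (Ci *m x) ^+ ny.+1 * \det (Bi *m Bi^T) = nrm2 (Co *m x) ^+ ny.+1 * \det (Bo *m Bo^T) ->
   Ai *m x = Ao *m x /\
   nrm2 (Ci *m x) *: (Bi *m Bi^T) = nrm2 (Co *m x) *: (Bo *m Bo^T)).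
Proof.
move=> uBo uBi ri2pos ro2pos hincl.
set ri2 := nrm2 (Ci *m x) in ri2pos *; set ro2 := nrm2 (Co *m x) in ro2pos *.
pose ri := Num.sqrt ri2; pose ro := Num.sqrt ro2.
have ri_sq : ri ^+ 2 = ri2 by rewrite sqr_sqrtr // ltW.
have ro_sq : ro ^+ 2 = ro2 by rewrite sqr_sqrtr // ltW.
have ri_gt0 : 0 < ri by rewrite sqrtr_gt0.
have ro_gt0 : 0 < ro by rewrite sqrtr_gt0.
pose c := ro^-1 *: (invmx Bo *m ((Ai - Ao) *m x)).
pose M := (ri / ro) *: (invmx Bo *m Bi).
have uM : M \in unitmx.
  rewrite unitmxZ ?unitmx_mul ?unitmx_inv ?uBo ?uBi // unitfE mulf_neq0 //.
    exact: lt0r_neq0.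
  by rewrite invr_eq0 lt0r_neq0.
have H : forall w, nrm2 w <= 1 -> nrm2 (c + M *m w) <= 1.
  move=> w hw.
  have hz : nrm2 (ri *: w) <= nrm2 (Ci *m x).
    by rewrite nrm2Z ri_sq -/ri2 -[X in _ <= X]mulr1 ler_pM2l.
  have [hD hDz] := rank1_spec ri2pos hz.
  set D := cmx _ in hD hDz.
  have inner : in_inclusion Ai Bi Ci (cmx x) (cmx (Ai *m x + Bi *m (ri *: w))).
    exists D; split => //.
    by rewrite mulmxDl -!mulmxA -cmxM -[cmx Ci *m cmx x]cmxM hDz -cmxM -cmxD.
  have [D' [hD' eq]] := hincl _ _ inner.
  pose u0 := invmx Bo *m ((Ai - Ao) *m x + Bi *m (ri *: w)).
  have hu0 : D' *m cmx (Co *m x) = cmx u0.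
    have e1 : cmx Bo *m (D' *m cmx (Co *m x)) = cmx ((Ai - Ao) *m x + Bi *m (ri *: w)).
      move: eq; rewrite mulmxDl -!mulmxA -[cmx Co *m cmx x]cmxM => eq.
      rewrite mulmxBl addrAC cmxD cmxN eq -cmxM.
      by rewrite addrAC subrr add0r.
    by rewrite /u0 [RHS]cmxM -e1 mulmxA -cmxM mulVmx // cmx1 mul1mx.
  have h0 := spec_real hD' hu0.
  have -> : c + M *m w = ro^-1 *: u0.
    rewrite /c /M /u0 mulmxDr scalerDr -scalemxAl -!mulmxA -scalemxAr.
    by rewrite -scalemxAr scalerA mulrC.
  rewrite nrm2Z exprVn ro_sq -/ro2.
  by rewrite -(mulVf (lt0r_neq0 ro2pos)) ler_pM2l // invr_gt0.
have [hdet heq] := key_real uM H.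
have dBo : \det Bo != 0 by rewrite -unitfE -unitmxE.
have pE : forall B : 'M[R]_ny.+1, \det (B *m B^T) = \det B ^+ 2.
  by move=> B; rewrite det_mulmx det_tr expr2.
have dM : \det M ^+ 2 = (ri2 ^+ ny.+1 * \det (Bi *m Bi^T)) / (ro2 ^+ ny.+1 * \det (Bo *m Bo^T)).
  rewrite /M detZ det_mulmx det_inv !pE.
  rewrite -ri_sq -ro_sq !(exprAC _ 2) expr_div_n; field.
  by rewrite dBo expf_neq0 // lt0r_neq0.
have Ypos : 0 < ro2 ^+ ny.+1 * \det (Bo *m Bo^T).
  by rewrite mulr_gt0 ?exprn_gt0 // pE exprn_even_gt0 //.
split.
  by move: hdet; rewrite dM ler_pdivrMr // mul1r.
move=> eqXY.
have [c0 MMt] : c = 0 /\ M *m M^T = 1%:M.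
  by apply: heq; rewrite dM eqXY mulfV // lt0r_neq0.
split.
  move/eqP: c0; rewrite scalemx_eq0 invr_eq0 (negbTE (lt0r_neq0 ro_gt0)) /=.
  move=> /eqP h.
  have : Bo *m (invmx Bo *m ((Ai - Ao) *m x)) = 0 by rewrite h mulmx0.
  rewrite mulmxA mulmxV // mul1mx mulmxBl => /eqP; rewrite subr_eq0 => /eqP //.
have e : M *m M^T = ((ri / ro) ^+ 2) *: (invmx Bo *m (Bi *m Bi^T) *m (invmx Bo)^T).
  by rewrite /M linearZ /= -scalemxAl -scalemxAr scalerA trmx_mul !mulmxA expr2.
have e2 : Bo *m (invmx Bo *m (Bi *m Bi^T) *m (invmx Bo)^T) *m Bo^T = Bi *m Bi^T.
  by rewrite !mulmxA mulmxV // mul1mx -!mulmxA -trmx_mul mulmxV // trmx1 mulmx1.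
have : Bo *m (M *m M^T) *m Bo^T = Bo *m Bo^T by rewrite MMt mulmx1.
rewrite e -scalemxAr -scalemxAl e2 expr_div_n ri_sq ro_sq => h.
rewrite -h scalerA mulrCA mulfV ?mulr1 //.
exact: lt0r_neq0.
Qed.

End Aux.

Unset Implicit Arguments.
Set Strict Implicit.
Set Printing Implicit Defensive.

Theorem proposition4 (R : realType) (nx ny : nat)
  (hnx : (0 < nx)%N) (hny : (0 < ny)%N)
  (Ao Ai : 'M[R]_(ny, nx)) (Bo Bi : 'M[R]_ny) (Co Ci : 'M[R]_nx)
  (hBo : Bo \in unitmx) (hBi : Bi \in unitmx)
  (hCo : Co \in unitmx) (hCi : Ci \in unitmx)
  (hincl : incl_contains Ao Bo Co Ai Bi Ci)
  (hW : incl_size Bo Co = incl_size Bi Ci) :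
  Ao = Ai /\
  exists lambda : R, 0 < lambda /\
    lambda *: (Bo *m Bo^T) = Bi *m Bi^T /\
    Co^T *m Co = lambda *: (Ci^T *m Ci).
Proof.
case: ny hny Ao Ai Bo Bi hBo hBi hincl hW => [//|ny] _ Ao Ai Bo Bi hBo hBi hincl hW.
case: nx hnx Ao Ai Co Ci hCo hCi hincl hW => [//|nx] _ Ao Ai Co Ci hCo hCi hincl hW.
have pE : forall B : 'M[R]_ny.+1, B \in unitmx -> 0 < \det (B *m B^T).
  move=> B uB; rewrite det_mulmx det_tr -expr2 exprn_even_gt0 //.
  by rewrite -unitfE -unitmxE.
set po := \det (Bo *m Bo^T) in hW *; set pi := \det (Bi *m Bi^T) in hW *.
have po0 : 0 < po by exact: pE.
have pi0 : 0 < pi by exact: pE.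
set K := (2 * ny.+1)%N in hW.
pose co := po `^ (K%:R^-1); pose ci := pi `^ (K%:R^-1).
have co0 : 0 < co by apply: powR_gt0.
have ci0 : 0 < ci by apply: powR_gt0.
have powK : forall p : R, 0 < p -> (p `^ (K%:R^-1)) ^+ 2 ^+ ny.+1 = p.
  move=> p p0; rewrite -exprM -/K -powR_mulrn ?powR_ge0 // -powRrM mulVf ?powRr1 ?ltW //.
  by rewrite pnatr_eq0.
have hx : forall x : 'cV[R]_nx.+1, x != 0 ->
    ci ^+ 2 * nrm2 (Ci *m x) <= co ^+ 2 * nrm2 (Co *m x) /\
    (ci ^+ 2 * nrm2 (Ci *m x) = co ^+ 2 * nrm2 (Co *m x) ->
      Ai *m x = Ao *m x /\ nrm2 (Ci *m x) *: (Bi *m Bi^T) = nrm2 (Co *m x) *: (Bo *m Bo^T)).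
  move=> x xn0.
  have nz : forall C : 'M[R]_nx.+1, C \in unitmx -> 0 < nrm2 (C *m x).
    move=> C uC; apply: nrm2_gt0; apply/eqP => h.
    have : invmx C *m (C *m x) = 0 by rewrite h mulmx0.
    by rewrite mulmxA mulVmx // mul1mx => x0; move: xn0; rewrite x0 eqxx.
  have [g1 g2] := geom hBo hBi (nz _ hCi) (nz _ hCo) hincl.
  rewrite -/po -/pi in g1 g2.
  have e1 : (ci ^+ 2 * nrm2 (Ci *m x)) ^+ ny.+1 = nrm2 (Ci *m x) ^+ ny.+1 * pi.
    by rewrite exprMn powK // mulrC.
  have e2 : (co ^+ 2 * nrm2 (Co *m x)) ^+ ny.+1 = nrm2 (Co *m x) ^+ ny.+1 * po.
    by rewrite exprMn powK // mulrC.
  split.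
    rewrite -(ler_pXn2r (ltn0Sn ny)) ?e1 ?e2 // qualifE /=.
      by rewrite mulr_ge0 ?sqr_ge0 ?nrm2_ge0.
    by rewrite mulr_ge0 ?sqr_ge0 ?nrm2_ge0.
  by move=> h; apply: g2; rewrite -e1 -e2 h.
have bfZ : forall n (a : R) (S : 'M[R]_n) u v, bf (a *: S) u v = a * bf S u v.
  by move=> n a S u v; rewrite /bf -scalemxAr -scalemxAl mxE.
pose ej (j : 'I_nx.+1) := delta_mx j 0 : 'cV[R]_nx.+1.
have frob : forall C : 'M[R]_nx.+1, frobnorm C = Num.sqrt (\sum_j nrm2 (C *m ej j)).
  move=> C; rewrite /frobnorm exchange_big /=; congr Num.sqrt.
  by apply: eq_bigr => j _; apply: eq_bigr => i _; rewrite /ej -colE !mxE.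
change (co * frobnorm Co = ci * frobnorm Ci) in hW.
rewrite !frob in hW.
have sum_ge0 : forall C : 'M[R]_nx.+1, 0 <= \sum_j nrm2 (C *m ej j).
  by move=> C; apply: sumr_ge0 => j _; exact: nrm2_ge0.
have hW2 : co ^+ 2 * (\sum_j nrm2 (Co *m ej j)) = ci ^+ 2 * (\sum_j nrm2 (Ci *m ej j)).
  by have := congr1 (fun t => t ^+ 2) hW; rewrite /= !exprMn !sqr_sqrtr.
have terms : forall j, ci ^+ 2 * nrm2 (Ci *m ej j) = co ^+ 2 * nrm2 (Co *m ej j).
  move=> j.
  have hsum : \sum_j (co ^+ 2 * nrm2 (Co *m ej j) - ci ^+ 2 * nrm2 (Ci *m ej j)) = 0.
    by rewrite sumrB -!mulr_sumr hW2 subrr.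
  have hge : forall i, true -> 0 <= co ^+ 2 * nrm2 (Co *m ej i) - ci ^+ 2 * nrm2 (Ci *m ej i).
    by move=> i _; rewrite subr_ge0; case: (hx _ (delta_neq0 R i)).
  have := (psumr_eq0P hge hsum isT : co ^+ 2 * nrm2 (Co *m ej j) - ci ^+ 2 * nrm2 (Ci *m ej j) = 0).
  by move/eqP; rewrite subr_eq0 eq_sym => /eqP.
pose Q := co ^+ 2 *: (Co^T *m Co) - ci ^+ 2 *: (Ci^T *m Ci).
have qQ : forall v, qf Q v = co ^+ 2 * nrm2 (Co *m v) - ci ^+ 2 * nrm2 (Ci *m v).
  by move=> v; rewrite /qf /Q bf_sub !bfZ -/(qf _ _) -/(qf _ _) !qf_mul.
have Q0 : Q = 0.
  apply: psd_diag0.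
  - by rewrite /Q linearB /= !linearZ /= !trmx_mul !trmxK.
  - move=> v; case: (eqVneq v 0) => [->|vn0].
      by rewrite /qf /bf mulmx0 mxE.
    by rewrite qQ subr_ge0; case: (hx _ vn0).
  - by move=> i; rewrite -qf_delta qQ -/(ej i) terms subrr.
split.
  apply/matrixP => i j.
  have [_ h] := hx (ej j) (delta_neq0 R j); have [h1 _] := h (terms j).
  by have := congr1 (fun A : 'cV[R]_ny.+1 => A i 0) h1; rewrite /ej -!colE !mxE => ->.
have [_ h] := hx (ej 0) (delta_neq0 R 0); have [_ h2] := h (terms 0).
have nz : forall C : 'M[R]_nx.+1, C \in unitmx -> 0 < nrm2 (C *m ej 0).
  move=> C uC; apply: nrm2_gt0; apply/eqP => h0.
  have : invmx C *m (C *m ej 0) = 0 by rewrite h0 mulmx0.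
  by rewrite mulmxA mulVmx // mul1mx => /eqP; rewrite (negbTE (delta_neq0 R _)).
have ri0 := nz _ hCi; have ro0 := nz _ hCo.
set ri2 := nrm2 (Ci *m ej 0) in ri0 h2 *; set ro2 := nrm2 (Co *m ej 0) in ro0 h2 *.
have t0 := terms 0; rewrite -/ri2 -/ro2 in t0.
exists (ro2 / ri2); split; first by rewrite divr_gt0.
have co2nz : co ^+ 2 != 0 by rewrite expf_neq0 // lt0r_neq0.
split.
  rewrite -scalerA scalerA mulrC -scalerA -h2 scalerA mulVf ?scale1r //.
  exact: lt0r_neq0.
have lamE : ro2 / ri2 = ci ^+ 2 / co ^+ 2.
  rewrite -[ro2](mulKf co2nz) -t0; field.
  by rewrite (lt0r_neq0 ri0) (lt0r_neq0 co0).
have : co ^+ 2 *: (Co^T *m Co) = ci ^+ 2 *: (Ci^T *m Ci) by apply/eqP; rewrite -subr_eq0 -/Q Q0.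
move=> e; rewrite lamE -[Co^T *m Co](scalerK co2nz) e scalerA mulrC //.
Qed.
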